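(* For integers $N\ge1$ and $n\ge2$ let $$\Sigma_2(n,N)=\sum_{(k,r,s)\in B_{m}\setminus B_{N\sqrt n}}\binom{2n}{n+\frac12krs}\binom{2n}{n+\frac14\left(kr^2+ks^2+(-1)^{\frac{k+1}{2}}\right)},\qquad m=5\sqrt{n\log n}.$$ Then $$\lim_{N\to\infty}\limsup_{n\to\infty}\frac{\Sigma_2(n,N)}{16^n\log n/\sqrt n}=0.$$
   Context: For real $t>0$, $B_t$ is the set of triples $(k,r,s)\in\mathbf Z^3$ with $k>0$ odd, $r>s>0$, $\gcd(r,s)=1$, $r\not\equiv s\pmod 2$, and $k(r^2+s^2)\le t$. Convention: $\binom{a}{b}=0$ if $b>a$. *)

(* Defs.v *)
From Stdlib Require Import Reals ZArith List Lra Lia.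
From Coquelicot Require Import Coquelicot.
Import ListNotations.
Open Scope R_scope.

Definition binomZ (a b : Z) : R :=
  if (Z.leb 0 b && Z.leb b a)%bool then Binomial.C (Z.to_nat a) (Z.to_nat b) else 0.

Definition inB (t : R) (k r s : Z) : bool :=
  (Z.ltb 0 k && Z.odd k && Z.ltb 0 s && Z.ltb s r && Z.eqb (Z.gcd r s) 1
   && negb (Bool.eqb (Z.odd r) (Z.odd s))
   && (if Rle_dec (IZR (k * (r ^ 2 + s ^ 2))) t then true else false))%bool.

Definition Zrange (M : nat) : list Z := map Z.of_nat (seq 0 (S M)).

Definition mbound (n : nat) : R := 5 * sqrt (INR n * ln (INR n)).

(* Every (k,r,s) in B_t has 0 <= k,r,s <= t < up t, so summing over
   the cube [0, up t]^3 with the membership filter sums over all of B_m. *)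
Definition Sigma2 (n N : nat) : R :=
  let m := mbound n in
  let M := Z.to_nat (up m) in
  fold_right Rplus 0
    (map (fun '(k, (r, s)) =>
            binomZ (2 * Z.of_nat n) (Z.of_nat n + (k * r * s) / 2)
            * binomZ (2 * Z.of_nat n)
                (Z.of_nat n + (k * r ^ 2 + k * s ^ 2 + (-1) ^ ((k + 1) / 2)) / 4))
       (filter (fun '(k, (r, s)) =>
                  (inB m k r s && negb (inB (INR N * sqrt (INR n)) k r s))%bool)
          (list_prod (Zrange M) (list_prod (Zrange M) (Zrange M))))).

(* Main.v *)
Require Import Defs.
From Stdlib Require Import Reals ZArith List Lra Lia Factorial.
From Coquelicot Require Import Coquelicot.
Open Scope R_scope.
Lemma Cstep (a k : nat) : (k < a)%nat ->
  Binomial.C a (S k) * INR (S k) = Binomial.C a k * INR (a - k).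
Proof.
  intro H. unfold Binomial.C.
  replace (a - k)%nat with (S (a - S k)) by lia.
  rewrite !fact_simpl, !mult_INR.
  pose proof (INR_fact_neq_0 k). pose proof (INR_fact_neq_0 (a - S k)).
  assert (INR (S k) <> 0) by (apply not_0_INR; lia).
  assert (INR (S (a - S k)) <> 0) by (apply not_0_INR; lia).
  field. auto.
Qed.

Lemma C_nonneg a k : 0 <= Binomial.C a k.
Proof.
  unfold Binomial.C. pose proof (INR_fact_lt_0 a). pose proof (INR_fact_lt_0 k).
  pose proof (INR_fact_lt_0 (a-k)).
  apply Rlt_le, Rdiv_lt_0_compat; auto. apply Rmult_lt_0_compat; auto.
Qed.

Lemma Ccentral_step n :
  Binomial.C (2 * S n) (S n) * INR (S n) = 2 * INR (2 * n + 1) * Binomial.C (2 * n) n.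
Proof.
  unfold Binomial.C.
  replace (2 * S n - S n)%nat with (S n) by lia.
  replace (2 * n - n)%nat with n by lia.
  replace (2 * S n)%nat with (S (S (2 * n))) by lia.
  rewrite !fact_simpl, !mult_INR.
  pose proof (INR_fact_neq_0 n).
  assert (INR (S n) <> 0) by (apply not_0_INR; lia).
  rewrite !S_INR, !mult_INR, !plus_INR in *. simpl. rewrite !plus_INR. simpl. field.
  split; auto.
Qed.

Lemma Ccentral_bound n :
  Binomial.C (2 * n) n ^ 2 * (3 * INR n + 1) <= 16 ^ n.
Proof.
  induction n.
  - simpl. unfold Binomial.C. simpl. lra.
  - pose proof (Ccentral_step n) as E.
    set (c := Binomial.C (2 * n) n) in *.
    set (d := Binomial.C (2 * S n) (S n)) in *.
    assert (Hc : 0 <= c) by apply C_nonneg.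
    assert (Hx : 0 <= INR n) by apply pos_INR.
    rewrite S_INR in E |- *. rewrite plus_INR, mult_INR in E. simpl in E.
    assert (Hd : d = 2 * (2 * INR n + 1) * c / (INR n + 1)).
    { apply (Rmult_eq_reg_r (INR n + 1)). rewrite E. field. lra. lra. }
    rewrite Hd. simpl pow.
    assert (K : (2 * INR n + 1)^2 * (3 * INR n + 4) <= 4 * (INR n + 1)^2 * (3*INR n + 1)) by nra.
    assert (c * (c * 1) * 16 * (3 * INR n + 1) <= 16 * 16 ^ n) by (simpl in IHn; lra).
    apply Rle_trans with (c * (c * 1) * 16 * (3 * INR n + 1)); auto.
    unfold Rdiv. replace (2 * (2 * INR n + 1) * c * / (INR n + 1) *
       (2 * (2 * INR n + 1) * c * / (INR n + 1) * 1) * (3 * (INR n + 1) + 1))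
      with ((c*c) * 4 * ((2 * INR n + 1)^2 * (3 * INR n + 4)) / (INR n + 1)^2) by (field; lra).
    apply (Rmult_le_reg_r ((INR n + 1)^2)). nra.
    unfold Rdiv. rewrite Rmult_assoc, Rinv_l by nra.
    assert (0 <= c*c) by nra. nra.
Qed.

Lemma Ctail n j : (j <= n)%nat ->
  Binomial.C (2 * n) (n + j) * (2 * INR n + INR j ^ 2) <= 2 * INR n * Binomial.C (2 * n) n.
Proof.
  induction j; intro Hj.
  - rewrite Nat.add_0_r. simpl. lra.
  - pose proof (Cstep (2 * n) (n + j) ltac:(lia)) as E.
    rewrite Nat.add_succ_r.
    specialize (IHj ltac:(lia)).
    set (x := Binomial.C (2 * n) (n + j)) in *.
    set (y := Binomial.C (2 * n) (S (n + j))) in *.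
    replace (2 * n - (n + j))%nat with (n - j)%nat in E by lia.
    assert (Hx : 0 <= x) by apply C_nonneg.
    assert (Hy : 0 <= y) by apply C_nonneg.
    rewrite minus_INR in E by lia.
    rewrite S_INR, plus_INR in E. rewrite S_INR.
    assert (0 <= INR j) by apply pos_INR.
    assert (INR j + 1 <= INR n) by (rewrite <- S_INR; apply le_INR; lia).
    assert (P : (INR n - INR j) * (2 * INR n + (INR j + 1) ^ 2) <=
                (INR n + INR j + 1) * (2 * INR n + INR j ^ 2)) by nra.
    apply (Rmult_le_reg_r (INR n + INR j + 1)). lra.
    apply Rle_trans with (x * (2 * INR n + INR j ^ 2) * (INR n + INR j + 1)).
    + replace (y * (2 * INR n + (INR j + 1) ^ 2) * (INR n + INR j + 1))
        with (y * (INR n + INR j + 1) * (2 * INR n + (INR j + 1) ^ 2)) by ring.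
      rewrite E. nra.
    + apply Rmult_le_compat_r; lra.
Qed.
Fixpoint lsum {A} (l : list A) (f : A -> R) : R :=
  match l with nil => 0 | a :: t => f a + lsum t f end.

Lemma fr_map {A} (l : list A) f : fold_right Rplus 0 (map f l) = lsum l f.
Proof. induction l; simpl; auto. rewrite IHl; auto. Qed.

Lemma lsum_app {A} (l1 l2 : list A) f : lsum (l1 ++ l2) f = lsum l1 f + lsum l2 f.
Proof. induction l1; simpl. lra. rewrite IHl1; lra. Qed.

Lemma lsum_map {A B} (h : A -> B) l f : lsum (map h l) f = lsum l (fun x => f (h x)).
Proof. induction l; simpl; auto. rewrite IHl; auto. Qed.

Lemma lsum_ext {A} (l : list A) f g : (forall x, f x = g x) -> lsum l f = lsum l g.
Proof. intro H; induction l; simpl; auto. rewrite IHl, H; auto. Qed.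

Lemma lsum_le {A} (l : list A) f g : (forall x, f x <= g x) -> lsum l f <= lsum l g.
Proof. intro H; induction l; simpl. lra. specialize (H a). lra. Qed.

Lemma lsum_le_in {A} (l : list A) f g : (forall x, In x l -> f x <= g x) -> lsum l f <= lsum l g.
Proof. intro H; induction l; simpl. lra.
  assert (f a <= g a) by (apply H; simpl; auto).
  assert (lsum l f <= lsum l g) by (apply IHl; intros; apply H; simpl; auto). lra. Qed.

Lemma lsum_nonneg {A} (l : list A) f : (forall x, 0 <= f x) -> 0 <= lsum l f.
Proof. intro H; induction l; simpl. lra. specialize (H a). lra. Qed.

Lemma lsum_scal {A} (l : list A) c f : lsum l (fun x => c * f x) = c * lsum l f.
Proof. induction l; simpl. ring. rewrite IHl; ring. Qed.

Lemma lsum_filter {A} (l : list A) p f :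
  lsum (filter p l) f = lsum l (fun x => if p x then f x else 0).
Proof. induction l; simpl; auto. destruct (p a); simpl; rewrite IHl; ring. Qed.

Lemma lsum_prod {A B} (l1 : list A) (l2 : list B) f :
  lsum (list_prod l1 l2) f = lsum l1 (fun a => lsum l2 (fun b => f (a, b))).
Proof. induction l1; simpl; auto. rewrite lsum_app, lsum_map, IHl1. auto. Qed.

Lemma count_le (r : nat) : forall L a,
  lsum (seq a L) (fun s => if Nat.leb s r then 1 else 0) <= INR (S r - a).
Proof.
  induction L; intro a; cbn [lsum seq]. apply pos_INR.
  specialize (IHL (S a)).
  destruct (Nat.leb a r) eqn:E.
  - apply Nat.leb_le in E. replace (S r - a)%nat with (S (r - a)) by lia.
    rewrite S_INR. replace (S r - S a)%nat with (r - a)%nat in IHL by lia. lra.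
  - apply Nat.leb_gt in E. replace (S r - a)%nat with 0%nat by lia.
    replace (S r - S a)%nat with 0%nat in IHL by lia. lra.
Qed.

Definition hX (X : R) (r : nat) : R :=
  if Nat.leb 1 r then (if Rlt_dec X (2 * INR r ^ 2) then 1 / INR r ^ 3 else 0) else 0.

Definition BdX (X : R) (r : nat) : R :=
  if Rlt_dec X (2 * INR r ^ 2) then 1 / (2 * (INR r - /2) ^ 2) else 8 / X.

Lemma real_tel x : 1 <= x -> 1 / x ^ 3 + 1 / (2 * (x + 1 - /2) ^ 2) <= 1 / (2 * (x - /2) ^ 2).
Proof.
  intro H.
  assert (0 < x - /2) by lra.
  replace (x + 1 - /2) with (x + /2) by field.
  assert (K: 2 * (x - /2)^2 * (x + /2)^2 * 2 <= 2 * x^3 * ((x + /2)^2 - (x - /2)^2)).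
  { replace ((x + /2)^2 - (x - /2)^2) with (2 * x) by field.
    replace ((x - / 2) ^ 2 * (x + / 2) ^ 2) with ((x^2 - /4)^2) by field.
    nra. }
  assert (0 < x^3) by (apply pow_lt; lra).
  assert (0 < (x - /2)^2) by (apply pow_lt; lra).
  assert (0 < (x + /2)^2) by (apply pow_lt; lra).
  set (a := (x - /2)^2) in *. set (b := (x + /2)^2) in *. set (c := x^3) in *.
  apply (Rmult_le_reg_r (2*a*b*c)). apply Rmult_lt_0_compat; [|lra]. nra.
  replace ((1 / c + 1 / (2 * b)) * (2 * a * b * c)) with (2*a*b + a*c) by (field; lra).
  replace (1 / (2 * a) * (2 * a * b * c)) with (b*c) by (field; lra).
  lra.
Qed.

Lemma hX_tail X : 0 < X -> forall L r, (1 <= r)%nat -> lsum (seq r L) (hX X) <= BdX X r.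
Proof.
  intros HX. induction L; intros r Hr; simpl.
  - unfold BdX. destruct Rlt_dec.
    + assert (1 <= INR r) by (apply (le_INR 1); lia).
      assert (0 < (INR r - /2)^2) by (apply pow_lt; lra).
      apply Rlt_le, Rdiv_lt_0_compat; lra.
    + apply Rlt_le, Rdiv_lt_0_compat; lra.
  - specialize (IHL (S r) ltac:(lia)).
    assert (1 <= INR r) by (apply (le_INR 1); lia).
    unfold hX at 1. replace (Nat.leb 1 r) with true by (symmetry; apply Nat.leb_le; lia).
    unfold BdX in IHL |- *. rewrite S_INR in IHL.
    destruct (Rlt_dec X (2 * INR r ^ 2)).
    + destruct (Rlt_dec X (2 * (INR r + 1) ^ 2)); [|exfalso; nra].
      pose proof (real_tel (INR r) H). lra.
    + destruct (Rlt_dec X (2 * (INR r + 1) ^ 2)).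
      * apply Rle_trans with (1 / (2 * (INR r + 1 - / 2) ^ 2)); [lra|].
        assert (0 < (INR r + 1 - /2)^2) by (apply pow_lt; lra).
        unfold Rdiv. rewrite !Rmult_1_l.
        apply Rle_trans with (/ (X / 8)).
        -- apply Rinv_le_contravar. lra. nra.
        -- apply Req_le. field. lra.
      * lra.
Qed.

Lemma hX_sum X : 0 < X -> forall L, lsum (seq 0 L) (hX X) <= 8 / X.
Proof.
  intros HX [|L]; simpl. apply Rlt_le, Rdiv_lt_0_compat; lra.
  unfold hX at 1. simpl. pose proof (hX_tail X HX L 1 (le_n 1)).
  unfold BdX in H. simpl in H. destruct Rlt_dec.
  - apply Rle_trans with 2. lra.
    apply Rle_trans with (8 / 2). lra. unfold Rdiv. apply Rmult_le_compat_l. lra.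
    apply Rinv_le_contravar; lra.
  - lra.
Qed.

Lemma harmonic M : (1 <= M)%nat -> lsum (seq 1 M) (fun k => 1 / INR k) <= 1 + ln (INR M).
Proof.
  induction M; intro H. lia.
  destruct M. simpl. rewrite ln_1. lra.
  specialize (IHM ltac:(lia)).
  rewrite seq_S, lsum_app. cbn [lsum].
  replace (1 + S M)%nat with (S (S M)) by lia.
  set (x := INR (S M)) in *. rewrite (S_INR (S M)). fold x.
  assert (1 <= x) by (apply (le_INR 1); lia).
  assert (ln x - ln (x+1) <= - (1 / (x + 1))).
  { replace (ln x - ln (x+1)) with (ln (x / (x+1))) by (unfold Rdiv; rewrite ln_mult, ln_Rinv; try lra; apply Rinv_0_lt_compat; lra). pose proof (exp_ineq1_le (ln (x / (x+1)))).
    rewrite exp_ln in H1. apply Rle_trans with (x/(x+1) - 1). lra.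
    apply Req_le. field. lra. apply Rdiv_lt_0_compat; lra. }
  lra.
Qed.

Lemma Z2N_2n n : Z.to_nat (2 * Z.of_nat n) = (2 * n)%nat.
Proof. lia. Qed.

Lemma binomZ_nonneg a b : 0 <= binomZ a b.
Proof. unfold binomZ. destruct (_ && _)%bool. apply C_nonneg. lra. Qed.

Lemma B2 n (j : Z) : (0 <= j)%Z ->
  binomZ (2 * Z.of_nat n) (Z.of_nat n + j) * (2 * INR n + IZR j ^ 2)
  <= 2 * INR n * Binomial.C (2 * n) n.
Proof.
  intro Hj. unfold binomZ.
  assert (0 <= Binomial.C (2 * n) n) by apply C_nonneg.
  assert (0 <= INR n) by apply pos_INR.
  destruct ((0 <=? Z.of_nat n + j)%Z && (Z.of_nat n + j <=? 2 * Z.of_nat n)%Z)%bool eqn:E.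
  - apply andb_prop in E. destruct E as [_ E]. apply Z.leb_le in E.
    rewrite Z2N_2n.
    replace j with (Z.of_nat (Z.to_nat j)) by lia.
    replace (Z.to_nat (Z.of_nat n + Z.of_nat (Z.to_nat j))) with (n + Z.to_nat j)%nat by lia.
    rewrite <- INR_IZR_INZ. apply Ctail. lia.
  - nra.
Qed.

Lemma B1 n (i : Z) : (1 <= n)%nat -> (0 <= i)%Z ->
  binomZ (2 * Z.of_nat n) (Z.of_nat n + i) <= Binomial.C (2 * n) n.
Proof.
  intros Hn Hi. pose proof (B2 n i Hi).
  pose proof (binomZ_nonneg (2 * Z.of_nat n) (Z.of_nat n + i)).
  assert (1 <= INR n) by (apply (le_INR 1); lia).
  assert (0 <= IZR i ^ 2) by (apply pow_le; apply IZR_le; lia).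
  set (b := binomZ (2 * Z.of_nat n) (Z.of_nat n + i)) in *. nra.
Qed.

Lemma final_real (n b1 b2 c J U P : R) :
  1 <= n -> 0 <= b1 -> 0 <= b2 -> b1 <= c ->
  b2 * (2 * n + J ^ 2) <= 2 * n * c -> U / 8 <= J -> 8 <= U ->
  c ^ 2 * (3 * n + 1) <= P ->
  b1 * b2 <= 43 * P / U ^ 2.
Proof.
  intros Hn Hb1 Hb2 Hc HJ HUJ HU HP.
  assert (0 <= c) by lra.
  assert (U <= 8 * J) by lra.
  assert (H1 : b2 * J^2 <= 2 * n * c) by nra.
  assert (H2 : U^2 <= 64 * J^2) by nra.
  assert (H3 : b2 * U^2 <= 128 * n * c) by nra.
  assert (H4 : b1 * b2 * U^2 <= c * (b2 * U^2)).
  { replace (b1 * b2 * U^2) with (b1 * (b2 * U^2)) by ring.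
    apply Rmult_le_compat_r; auto. nra. }
  assert (H5 : c * (b2 * U^2) <= 128 * n * c^2) by nra.
  assert (H6 : 128 * n * c^2 <= 43 * P) by nra.
  assert (0 < U^2) by nra.
  apply (Rmult_le_reg_r (U^2)); auto.
  replace (43 * P / U ^ 2 * U ^ 2) with (43 * P) by (field; lra). lra.
Qed.

Lemma neg1pow_ge (p : Z) : (-1 <= (-1) ^ p)%Z.
Proof.
  destruct (Z.lt_ge_cases p 0).
  - rewrite Z.pow_neg_r; lia.
  - assert (Z.abs ((-1) ^ p) = 1)%Z.
    { rewrite Z.abs_pow. simpl. apply Z.pow_1_l. lia. }
    lia.
Qed.

Lemma TB n (k r s : Z) : (1 <= n)%nat -> (0 < k)%Z -> (0 < s)%Z -> (s < r)%Z ->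
  8 <= IZR (k * (r ^ 2 + s ^ 2)) ->
  binomZ (2 * Z.of_nat n) (Z.of_nat n + (k * r * s) / 2)
  * binomZ (2 * Z.of_nat n)
      (Z.of_nat n + (k * r ^ 2 + k * s ^ 2 + (-1) ^ ((k + 1) / 2)) / 4)
  <= 43 * 16 ^ n / IZR (k * (r ^ 2 + s ^ 2)) ^ 2.
Proof.
  intros Hn Hk Hs Hr HU.
  set (u := (k * (r ^ 2 + s ^ 2))%Z) in *.
  set (x := (k * r ^ 2 + k * s ^ 2 + (-1) ^ ((k + 1) / 2))%Z).
  assert (Hx : (u - 1 <= x)%Z).
  { pose proof (neg1pow_ge ((k + 1) / 2)). unfold x, u. nia. }
  set (j := (x / 4)%Z).
  assert (Hj : (x - 3 <= 4 * j)%Z).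
  { pose proof (Z.div_mod x 4 ltac:(lia)). pose proof (Z.mod_pos_bound x 4 ltac:(lia)). unfold j. lia. }
  assert (HJ : IZR u - 4 <= 4 * IZR j).
  { replace 4 with (IZR 4) by reflexivity. rewrite <- mult_IZR, <- minus_IZR.
    apply IZR_le. lia. }
  assert (Hj0 : (0 <= j)%Z).
  { apply le_IZR. lra. }
  assert (Hi : (0 <= k * r * s / 2)%Z).
  { apply Z.div_pos; [nia|lia]. }
  apply final_real with (n := INR n) (c := Binomial.C (2 * n) n) (J := IZR j).
  - apply (le_INR 1); lia.
  - apply binomZ_nonneg.
  - apply binomZ_nonneg.
  - apply B1; auto.
  - apply B2; auto.
  - lra.
  - auto.
  - apply Ccentral_bound.
Qed.

Lemma inB_ext t1 t2 k r s : inB t1 k r s = true -> inB t2 k r s = false ->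
  (0 < k)%Z /\ (0 < s)%Z /\ (s < r)%Z /\ t2 < IZR (k * (r ^ 2 + s ^ 2)).
Proof.
  unfold inB. intros H1 H2.
  repeat rewrite Bool.andb_true_iff in H1.
  destruct H1 as [[[[[[a b] c] d] e] f] g].
  rewrite a, b, c, d, e, f in H2. cbn [andb negb] in H2.
  destruct (Rle_dec (IZR (k * (r ^ 2 + s ^ 2))) t2); [discriminate|].
  apply Z.ltb_lt in a, c, d. repeat split; auto. lra.
Qed.

Definition Gf (A : R) (k r : nat) : R :=
  if (Nat.leb 1 k && Nat.leb 1 r)%bool then
    (if Rlt_dec (A / INR k) (2 * INR r ^ 2) then 1 / (INR k ^ 2 * INR r ^ 4) else 0)
  else 0.

Definition ind (s r : nat) : R := if Nat.leb s r then 1 else 0.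

Lemma Gf_nonneg A k r : 0 <= Gf A k r.
Proof.
  unfold Gf. destruct (_ && _)%bool eqn:E; [|lra]. destruct Rlt_dec; [|lra].
  apply andb_prop in E. destruct E as [E1 E2]. apply Nat.leb_le in E1, E2.
  apply Rlt_le, Rdiv_lt_0_compat; [lra|]. apply Rmult_lt_0_compat; apply pow_lt; apply lt_0_INR; lia.
Qed.

Lemma ind_nonneg s r : 0 <= ind s r.
Proof. unfold ind. destruct Nat.leb; lra. Qed.

Lemma point n N m k r s : (1 <= n)%nat -> 8 <= INR N * sqrt (INR n) ->
  (if (inB m (Z.of_nat k) (Z.of_nat r) (Z.of_nat s)
       && negb (inB (INR N * sqrt (INR n)) (Z.of_nat k) (Z.of_nat r) (Z.of_nat s)))%bool
   then binomZ (2 * Z.of_nat n) (Z.of_nat n + (Z.of_nat k * Z.of_nat r * Z.of_nat s) / 2)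
     * binomZ (2 * Z.of_nat n)
      (Z.of_nat n + (Z.of_nat k * Z.of_nat r ^ 2 + Z.of_nat k * Z.of_nat s ^ 2
                      + (-1) ^ ((Z.of_nat k + 1) / 2)) / 4)
   else 0)
  <= 43 * 16 ^ n * (Gf (INR N * sqrt (INR n)) k r * ind s r).
Proof.
  intros Hn HA. set (A := INR N * sqrt (INR n)) in *.
  assert (0 <= 16 ^ n) by (apply pow_le; lra).
  destruct (inB m _ _ _) eqn:E1; simpl;
   [|apply Rmult_le_pos; [lra|apply Rmult_le_pos; [apply Gf_nonneg|apply ind_nonneg]]].
  destruct (inB A _ _ _) eqn:E2; simpl;
   [apply Rmult_le_pos; [lra|apply Rmult_le_pos; [apply Gf_nonneg|apply ind_nonneg]]|].
  destruct (inB_ext _ _ _ _ _ E1 E2) as [Hk [Hs [Hr HU]]].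
  eapply Rle_trans. apply TB; auto; lra.
  replace (IZR (Z.of_nat k * (Z.of_nat r ^ 2 + Z.of_nat s ^ 2)))
    with (INR k * (INR r ^ 2 + INR s ^ 2)) in *
    by (rewrite !INR_IZR_INZ;
        replace (Z.of_nat k * (Z.of_nat r ^ 2 + Z.of_nat s ^ 2))%Z with
          (Z.of_nat k * (Z.of_nat r * Z.of_nat r + Z.of_nat s * Z.of_nat s))%Z by ring;
        rewrite mult_IZR, plus_IZR, !mult_IZR; ring).
  unfold ind, Gf.
  replace (Nat.leb s r) with true by (symmetry; apply Nat.leb_le; lia).
  replace (Nat.leb 1 k) with true by (symmetry; apply Nat.leb_le; lia).
  replace (Nat.leb 1 r) with true by (symmetry; apply Nat.leb_le; lia).
  simpl andb.
  assert (1 <= INR k) by (apply (le_INR 1); lia).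
  assert (1 <= INR s) by (apply (le_INR 1); lia).
  assert (INR s <= INR r) by (apply le_INR; lia).
  assert (Hrs : INR r ^ 2 + INR s ^ 2 <= 2 * INR r ^ 2) by nra.
  destruct Rlt_dec as [_|NA].
  2:{ exfalso. apply NA. apply (Rmult_lt_reg_l (INR k)). lra.
      unfold Rdiv. rewrite <- Rmult_assoc, (Rmult_comm _ A), Rmult_assoc, Rinv_r, Rmult_1_r by lra.
      nra. }
  rewrite Rmult_1_r. unfold Rdiv. rewrite Rmult_1_l. apply Rmult_le_compat_l. nra.
  apply Rinv_le_contravar. apply Rmult_lt_0_compat; apply pow_lt; lra.
  assert (INR k ^ 2 * INR r ^ 4 <= (INR k * INR r^2)^2) by (right; ring).
  assert (INR k * INR r ^ 2 <= INR k * (INR r ^ 2 + INR s ^ 2)) by nra.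
  assert (0 <= INR k * INR r ^ 2) by nra. nra.
Qed.

Lemma rsum_bound A k L : 0 < A ->
  lsum (seq 0 L) (fun r => lsum (seq 0 L) (fun s => Gf A k r * ind s r))
  <= if Nat.leb 1 k then 16 / (INR k * A) else 0.
Proof.
  intro HA.
  destruct (Nat.leb 1 k) eqn:Ek.
  2:{ apply Req_le. rewrite <- (Rmult_0_r (INR 0)). 
      transitivity (lsum (seq 0 L) (fun r : nat => 0 * lsum (seq 0 L) (fun s => 0))).
      apply lsum_ext; intro r. rewrite <- lsum_scal. apply lsum_ext; intro s.
      unfold Gf. rewrite Ek. simpl. ring.
      rewrite lsum_scal. simpl. ring. }
  apply Nat.leb_le in Ek.
  assert (Hk : 1 <= INR k) by (apply (le_INR 1); lia).
  apply Rle_trans with (lsum (seq 0 L) (fun r => (2 / INR k ^ 2) * hX (A / INR k) r)).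
  - apply lsum_le; intro r. rewrite lsum_scal.
    pose proof (count_le r L 0). rewrite Nat.sub_0_r, S_INR in H.
    pose proof (Gf_nonneg A k r).
    apply Rle_trans with (Gf A k r * (INR r + 1)). apply Rmult_le_compat_l; auto.
    unfold Gf, hX. rewrite (proj2 (Nat.leb_le 1 k) Ek). cbn [andb].
    destruct (Nat.leb 1 r) eqn:Er.
    + apply Nat.leb_le in Er. assert (Hr : 1 <= INR r) by (apply (le_INR 1); lia).
      destruct Rlt_dec; [|lra].
      assert (0 < INR k ^ 2) by (apply pow_lt; lra).
      assert (0 < INR r ^ 3) by (apply pow_lt; lra).
      replace (1 / (INR k ^ 2 * INR r ^ 4) * (INR r + 1)) with
        ((INR r + 1) / INR r * (1 / (INR k ^ 2 * INR r ^ 3))) by (field; lra).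
      replace (2 / INR k ^ 2 * (1 / INR r ^ 3)) with
        (2 * (1 / (INR k ^ 2 * INR r ^ 3))) by (field; lra).
      apply Rmult_le_compat_r. apply Rlt_le, Rdiv_lt_0_compat; nra.
      apply (Rmult_le_reg_r (INR r)). lra. unfold Rdiv. rewrite Rmult_assoc, Rinv_l by lra. lra.
    + lra.
  - rewrite lsum_scal.
    assert (0 < A / INR k) by (apply Rdiv_lt_0_compat; lra).
    pose proof (hX_sum (A / INR k) H L).
    apply Rle_trans with (2 / INR k ^ 2 * (8 / (A / INR k))).
    apply Rmult_le_compat_l; auto. apply Rlt_le, Rdiv_lt_0_compat. lra. apply pow_lt; lra.
    apply Req_le. field. lra.
Qed.

Lemma ksum_bound A M : 0 < A -> (1 <= M)%nat ->
  lsum (seq 0 (S M)) (fun k => if Nat.leb 1 k then 16 / (INR k * A) else 0)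
  <= 16 / A * (1 + ln (INR M)).
Proof.
  intros HA HM. cbn [seq lsum]. simpl Nat.leb at 1. rewrite Rplus_0_l.
  apply Rle_trans with (lsum (seq 1 M) (fun k => 16 / A * (1 / INR k))).
  - apply lsum_le_in. intros k Hk. apply in_seq in Hk.
    replace (Nat.leb 1 k) with true by (symmetry; apply Nat.leb_le; lia).
    assert (0 < INR k) by (apply lt_0_INR; lia).
    apply Req_le. field. lra.
  - rewrite lsum_scal. apply Rmult_le_compat_l. apply Rlt_le, Rdiv_lt_0_compat; lra.
    apply harmonic; auto.
Qed.

Lemma Sigma2_bound n N : (1 <= n)%nat -> 8 <= INR N * sqrt (INR n) ->
  (1 <= Z.to_nat (up (mbound n)))%nat ->
  Sigma2 n N <= 43 * 16 ^ n * (16 / (INR N * sqrt (INR n)) * (1 + ln (INR (Z.to_nat (up (mbound n)))))).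
Proof.
  intros Hn HA HM.
  unfold Sigma2. cbv zeta.
  set (M := Z.to_nat (up (mbound n))) in *.
  set (A := INR N * sqrt (INR n)) in *.
  rewrite fr_map, lsum_filter, lsum_prod.
  rewrite (lsum_ext _ _ (fun a => lsum (Zrange M) (fun b => lsum (Zrange M) (fun c =>
     (if (inB (mbound n) a b c && negb (inB A a b c))%bool then
       binomZ (2 * Z.of_nat n) (Z.of_nat n + a * b * c / 2) *
       binomZ (2 * Z.of_nat n) (Z.of_nat n + (a * b ^ 2 + a * c ^ 2 + (-1) ^ ((a + 1) / 2)) / 4)
     else 0))))).
  2:{ intro a. rewrite lsum_prod. reflexivity. }
  unfold Zrange. rewrite lsum_map.
  eapply Rle_trans.
  { apply lsum_le. intro k. rewrite lsum_map. apply lsum_le. intro r. rewrite lsum_map.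
    apply lsum_le. intro s. apply point; auto. }
  apply Rle_trans with (lsum (seq 0 (S M)) (fun k => 43 * 16 ^ n *
     (if Nat.leb 1 k then 16 / (INR k * A) else 0))).
  - apply lsum_le. intro k.
    rewrite (lsum_ext _ _ (fun r => 43 * 16 ^ n * lsum (seq 0 (S M)) (fun s => Gf A k r * ind s r))).
    2:{ intro r. apply lsum_scal. }
    rewrite lsum_scal. apply Rmult_le_compat_l.
    + apply Rmult_le_pos. lra. apply pow_le; lra.
    + apply rsum_bound. lra.
  - rewrite lsum_scal. apply Rmult_le_compat_l.
    + apply Rmult_le_pos. lra. apply pow_le; lra.
    + apply ksum_bound; auto. lra.
Qed.

Lemma Sigma2_nonneg n N : 0 <= Sigma2 n N.
Proof.
  unfold Sigma2. cbv zeta. rewrite fr_map. apply lsum_nonneg.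
  intros [k [r s]]. apply Rmult_le_pos; apply binomZ_nonneg.
Qed.

Lemma M_facts n : (1 <= n)%nat ->
  (1 <= Z.to_nat (up (mbound n)))%nat /\ INR (Z.to_nat (up (mbound n))) <= 6 * INR n.
Proof.
  intro Hn.
  assert (H1 : 1 <= INR n) by (apply (le_INR 1); lia).
  assert (Hl0 : 0 <= ln (INR n)) by (rewrite <- ln_1; apply ln_le; lra).
  assert (Hl : ln (INR n) <= INR n).
  { pose proof (exp_ineq1_le (ln (INR n))). rewrite exp_ln in H by lra. lra. }
  assert (Hs : sqrt (INR n * ln (INR n)) <= INR n).
  { apply Rle_trans with (sqrt (INR n * INR n)); [apply sqrt_le_1_alt; nra | rewrite sqrt_square; lra]. }
  assert (Hs0 : 0 <= sqrt (INR n * ln (INR n))) by apply sqrt_pos.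
  unfold mbound. set (m := 5 * sqrt (INR n * ln (INR n))).
  destruct (archimed m) as [Ha Hb].
  assert (Hup : (0 < up m)%Z) by (apply lt_IZR; unfold m in *; lra).
  rewrite INR_IZR_INZ, Z2Nat.id by lia. split.
  - lia.
  - unfold m in *. lra.
Qed.

Lemma v_bound n N : (3 <= n)%nat -> 8 <= INR N ->
  Sigma2 n N / (16 ^ n * ln (INR n) / sqrt (INR n)) <= 3440 / INR N.
Proof.
  intros Hn HN.
  assert (H3 : 3 <= INR n) by (pose proof (le_INR 3 n ltac:(lia)) as T; simpl in T; lra).
  assert (HL : 1 <= ln (INR n)).
  { rewrite <- (ln_exp 1). apply ln_le. apply exp_pos. pose proof exp_le_3. lra. }
  assert (Hsq1 : 1 <= sqrt (INR n)).
  { rewrite <- sqrt_1. apply sqrt_le_1_alt. lra. }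
  destruct (M_facts n ltac:(lia)) as [HM1 HM2].
  set (M := Z.to_nat (up (mbound n))) in *.
  assert (HMp : 0 < INR M) by (apply lt_0_INR; lia).
  assert (HlnM : 1 + ln (INR M) <= 5 * ln (INR n)).
  { assert (ln (INR M) <= ln 6 + ln (INR n)).
    { rewrite <- ln_mult by lra. apply ln_le; lra. }
    assert (ln 6 <= 3 * ln (INR n)).
    { replace (3 * ln (INR n)) with (ln (INR n * INR n * INR n))
        by (rewrite !ln_mult by nra; ring).
      apply ln_le. lra. nra. }
    lra. }
  assert (HA : 8 <= INR N * sqrt (INR n)) by nra.
  pose proof (Sigma2_bound n N ltac:(lia) HA HM1) as HS. fold M in HS.
  set (S := Sigma2 n N) in *.
  set (L := ln (INR n)) in *. set (q := sqrt (INR n)) in *.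
  assert (H16 : 0 < 16 ^ n) by (apply pow_lt; lra).
  assert (HD : 0 < 16 ^ n * L / q) by (apply Rdiv_lt_0_compat; nra).
  assert (HS2 : S <= 3440 / INR N * (16 ^ n * L / q)).
  { eapply Rle_trans. apply HS.
    replace (3440 / INR N * (16 ^ n * L / q)) with
      (43 * 16 ^ n * (16 / (INR N * q) * (5 * L))) by (field; lra).
    apply Rmult_le_compat_l. nra. apply Rmult_le_compat_l; auto.
    apply Rlt_le, Rdiv_lt_0_compat; nra. }
  apply (Rmult_le_reg_r (16 ^ n * L / q)); auto.
  unfold Rdiv at 1. rewrite Rmult_assoc, Rinv_l, Rmult_1_r by lra. auto.
Qed.

Theorem lemma4p1 :
  forall eps : R, 0 < eps ->
  exists N0 : nat, forall N : nat, (1 <= N)%nat -> (N0 <= N)%nat ->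
    Rbar_lt
      (Rbar_abs (LimSup_seq (fun n : nat =>
         Sigma2 n N / (16 ^ n * ln (INR n) / sqrt (INR n)))))
      (Finite eps).
Proof.
  intros eps Heps.
  destruct (archimed (3440 / eps)) as [Ha _].
  assert (Hp : 0 < 3440 / eps) by (apply Rdiv_lt_0_compat; lra).
  exists (Nat.max 8 (Z.to_nat (up (3440 / eps)))).
  intros N _ HN.
  assert (HN8 : 8 <= INR N) by (pose proof (le_INR 8 N ltac:(lia)) as T; simpl in T; lra).
  assert (HNe : 3440 / eps < INR N).
  { apply Rlt_le_trans with (IZR (up (3440 / eps))); auto.
    assert (0 < up (3440 / eps))%Z by (apply lt_IZR; lra).
    rewrite <- (Z2Nat.id (up (3440 / eps))) by lia. rewrite <- INR_IZR_INZ.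
    apply le_INR. lia. }
  assert (Hb : 3440 / INR N < eps).
  { apply (Rmult_lt_reg_r (INR N)). lra. unfold Rdiv. rewrite Rmult_assoc, Rinv_l, Rmult_1_r by lra.
    apply (Rmult_lt_reg_r (/ eps)). apply Rinv_0_lt_compat; lra.
    replace (eps * INR N * / eps) with (INR N) by (field; lra). auto. }
  set (v := fun n : nat => Sigma2 n N / (16 ^ n * ln (INR n) / sqrt (INR n))).
  assert (Hup : Rbar_le (LimSup_seq v) (3440 / INR N)).
  { rewrite <- (LimSup_seq_const (3440 / INR N)). apply LimSup_le.
    exists 3%nat. intros n Hn. apply v_bound; auto. }
  assert (Hlo : Rbar_le 0 (LimSup_seq v)).
  { rewrite <- (LimSup_seq_const 0). apply LimSup_le.
    exists 3%nat. intros n Hn. unfold v.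
    assert (H3 : 3 <= INR n) by (pose proof (le_INR 3 n ltac:(lia)) as T; simpl in T; lra).
    assert (HL : 0 < ln (INR n)) by (rewrite <- ln_1; apply ln_increasing; lra).
    assert (0 < sqrt (INR n)) by (apply sqrt_lt_R0; lra).
    assert (0 < 16 ^ n) by (apply pow_lt; lra).
    apply Rmult_le_pos. apply Sigma2_nonneg.
    apply Rlt_le, Rinv_0_lt_compat, Rdiv_lt_0_compat; nra. }
  fold v.
  destruct (LimSup_seq v) as [x| |]; simpl in Hup, Hlo |- *; try contradiction.
  rewrite Rabs_pos_eq by lra. lra.
Qed.
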